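(* Let $P$ be a Poisson prime ideal of $A$. (1) If $P$ is proper then $\gamma(P)$ is dense. (2) If $t_i=1$ for some $i$, then in $\gamma(P)$ one has $\delta_i=1$ and, in $V_{\gamma(P)}$, $v_i=s_i$.
   Context: Let $n\ge 3$, $A=\mathbb{C}[x_1,\dots,x_n]$. Fix $s_1,t_1,\dots,s_{n-2},t_{n-2}\in A$ with each $t_i\ne 0$ and $s_i,t_i$ coprime, such that $s_1/t_1,\dots,s_{n-2}/t_{n-2}$ are algebraically independent over $\mathbb{C}$. $A$ carries the Poisson bracket $\{f,g\}=(t_1\cdots t_{n-2})^2\,\mathrm{Jac}(f,g,s_1/t_1,\dots,s_{n-2}/t_{n-2})$ ($\mathrm{Jac}$ = Jacobian determinant with respect to $x_1,\dots,x_n$). A Poisson prime ideal is a prime ideal $P$ with $\{P,A\}\subseteq P$; it is proper if not all $\{a,b\}$ ($a,b\in A$) lie in $P$. For $P$ a Poisson prime ideal, $\gamma(P)=((\gamma_1,\delta_1),\dots,(\gamma_{n-2},\delta_{n-2}))\in(\{0,1\}\times\{0,1\})^{n-2}$ is defined by $\gamma_i=0\iff s_i\in P$ and $\delta_i=0\iff t_i\in P$. A sequence $\gamma=((\gamma_1,\delta_1),\dots,(\gamma_{n-2},\delta_{n-2}))$ is dense if $(\gamma_i,\delta_i)\ne(0,0)$ for every $i$. For such $\gamma$, $V_\gamma=\{v_1,\dots,v_{n-2}\}$ where $v_i=s_i/t_i$ if $\delta_i=1$ and $v_i=t_i/s_i$ otherwise. *)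

(* Defs.v *)
(* The complex numbers are modelled as R[i] for
   an arbitrary R : realType (every realType is a model of the real numbers). *)
From HB Require Import structures.
From mathcomp Require Import all_boot all_order all_algebra.
From mathcomp Require Import fraction ring_quotient.
From mathcomp Require Import complex.
From mathcomp Require Import reals.
From mathcomp Require Import mpoly.

Set Implicit Arguments.
Unset Strict Implicit.
Unset Printing Implicit Defensive.

Import Order.TTheory GRing.Theory Num.Theory.
Local Open Scope ring_scope.

Notation "x %:F" := (@FracField.tofrac _ x) : ring_scope.

Section PoissonDefs.

Variable R : realType.
Local Notation C := (R[i]).
Variable n : nat.
Local Notation A := {mpoly C[n]}.
Local Notation F := {fraction A}.

Definition mdvd (d p : A) : Prop := exists q : A, p = d * q.
Definition mcoprime (p q : A) : Prop :=
  forall d : A, mdvd d p -> mdvd d q -> d \is a GRing.unit.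

Definition dfrac (p q : A) (j : 'I_n) : F :=
  ((mderiv j p * q - p * mderiv j q)%:F) / ((q ^+ 2)%:F).

Variables s t : 'I_(n - 2) -> A.

Definition jac_row (f g : A) (i : nat) (j : 'I_n) : F :=
  match i with
  | 0 => (mderiv j f)%:F
  | 1 => (mderiv j g)%:F
  | k.+2 => match @insub nat (fun k => k < n - 2)%N _ k with
            | Some k' => dfrac (s k') (t k') j
            | None => 0
            end
  end.

Definition jac_mx (f g : A) : 'M[F]_n :=
  \matrix_(i < n, j < n) jac_row f g i j.

(* h = {f, g} = (t_1 ... t_{n-2})^2 Jac(f, g, s_1/t_1, ..., s_{n-2}/t_{n-2}),
   the equality being taken in Frac(A). *)
Definition is_bracket (f g h : A) : Prop :=
  h%:F = ((\prod_(k < n - 2) t k) ^+ 2)%:F * \det (jac_mx f g).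

Definition alg_indep_fracs : Prop :=
  forall Q : {mpoly C[n - 2]},
    mmap (fun c : C => (c%:MP_[n])%:F) (fun k => (s k)%:F / (t k)%:F) Q = 0 ->
    Q = 0.

(* prime ideals of A (idealr_closed includes 1 \notin P) *)
Definition prime_ideal (P : {pred A}) : Prop :=
  idealr_closed P /\ prime_idealr_closed P.

Definition poisson_ideal (P : {pred A}) : Prop :=
  forall a b h : A, a \in P -> is_bracket a b h -> h \in P.

Definition poisson_prime (P : {pred A}) : Prop :=
  prime_ideal P /\ poisson_ideal P.

Definition proper_poisson (P : {pred A}) : Prop :=
  exists a b h : A, is_bracket a b h /\ h \notin P.

(* gamma(P)_i = (gamma_i, delta_i), with gamma_i = 0 <-> s_i \in P and
   delta_i = 0 <-> t_i \in P *)
Definition gam (P : {pred A}) (i : 'I_(n - 2)) : bool * bool :=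
  (s i \notin P, t i \notin P).

Definition dense (gm : 'I_(n - 2) -> bool * bool) : Prop :=
  forall i, gm i != (false, false).

Definition Vgam (gm : 'I_(n - 2) -> bool * bool) (i : 'I_(n - 2)) : F :=
  if (gm i).2 then (s i)%:F / (t i)%:F else (t i)%:F / (s i)%:F.

End PoissonDefs.

(* Main.v *)
Require Import Defs.
From HB Require Import structures.
From mathcomp Require Import all_boot all_order all_algebra.
From mathcomp Require Import fraction ring_quotient complex reals mpoly.
From mathcomp Require Import zify.

Import Order.TTheory GRing.Theory Num.Theory.
Local Open Scope ring_scope.

Section Aux.
Variable R : realType.
Variable n : nat.
Local Notation A := {mpoly R[i][n]}.
Variables s t : 'I_(n - 2) -> A.

Definition dnat (i : nat) : A :=
  match i with
  | 0 => 1 | 1 => 1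
  | k.+2 => match @insub nat (fun k => k < n - 2)%N _ k with
            | Some k' => t k' ^+ 2 | None => 1 end
  end.

Definition mrow (a b : A) (i : nat) (j : 'I_n) : A :=
  match i with
  | 0 => mderiv j a
  | 1 => mderiv j b
  | k.+2 => match @insub nat (fun k => k < n - 2)%N _ k with
            | Some k' => mderiv j (s k') * t k' - s k' * mderiv j (t k')
            | None => 0 end
  end.

Hypothesis ht : forall k, t k != 0.

Lemma mrowE a b (i : nat) j :
  (mrow a b i j)%:F = (dnat i)%:F * jac_row s t a b i j.
Proof.
case: i => [|[|k]] /=; rewrite ?tofrac1 ?mul1r //.
case: (insub k) => [k'|] /=; last by rewrite tofrac0 mulr0.
by rewrite [RHS]mulrC /dfrac divfK // tofrac_eq0 expf_neq0.
Qed.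

Hypothesis hn2 : (2 <= n)%N.

Lemma prod_dnat : \prod_(r < n) dnat r = (\prod_(k < n - 2) t k) ^+ 2.
Proof.
rewrite -prodrXl -(big_mkord xpredT dnat) (big_cat_nat _ (n:=2)) //=.
rewrite big_nat_recl // big_nat_recl // big_geq // /= !mul1r.
transitivity (\prod_(0 + 2 <= i < n) dnat i) => //; rewrite big_addn big_mkord.
apply: eq_bigr => k _ /=.
by rewrite addn2 /dnat (_ : insub _ = Some k) // -(valK k).
Qed.

Lemma det_mrow a b h : is_bracket s t a b h ->
  \det (\matrix_(i < n, j < n) mrow a b i j) = h.
Proof.
move=> hb; apply/eqP; rewrite -tofrac_eq -det_map_mx hb.
have -> : map_mx (@FracField.tofrac _) (\matrix_(i < n, j < n) mrow a b i j)
   = diag_mx (\row_(r < n) (dnat r)%:F) *m jac_mx s t a b.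
  by apply/matrixP => i j; rewrite mul_diag_mx !mxE mrowE.
rewrite det_mulmx det_diag.
rewrite (eq_bigr (fun r : 'I_n => (dnat r)%:F)); last by move=> r _; rewrite mxE.
by rewrite -rmorph_prod prod_dnat.
Qed.
End Aux.

Theorem lemma2p16 (R : realType) (n : nat) (hn : (3 <= n)%N)
    (s t : 'I_(n - 2) -> {mpoly R[i][n]})
    (ht : forall k, t k != 0)
    (hcop : forall k, mcoprime (s k) (t k))
    (hind : alg_indep_fracs s t)
    (P : {pred {mpoly R[i][n]}})
    (hP : poisson_prime s t P) :
  (proper_poisson s t P -> dense (gam s t P)) /\
  (forall k, t k = 1 ->
     (gam s t P k).2 = true /\ Vgam s t (gam s t P) k = (s k)%:F).
Proof.
case: hP => [[[P0 P1 Pc] _] _].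
split; last first.
  move=> k tk1; have h2 : (gam s t P k).2 = true by rewrite /gam /= tk1.
  by split => //; rewrite /Vgam h2 tk1 tofrac1 divr1.
move=> [a [b [h [hb hnP]]]] k; apply/negP => /eqP hk.
move: hk; rewrite /gam => -[/negbFE sP /negbFE tP].
apply/negP: hnP; apply/negPn.
have hn2 : (2 <= n)%N by lia.
rewrite -(@det_mrow _ _ _ _ ht hn2 _ _ _ hb).
have hr : (k.+2 < n)%N by have := ltn_ord k; lia.
rewrite (expand_det_row _ (Ordinal hr)).
apply: (big_ind (fun x => x \in P)) => //.
  by move=> x y xP yP; rewrite -[x]mul1r Pc.
have comb : forall x y u v, u \in P -> v \in P -> x * u + y * v \in P.
  by move=> x y u v uP vP; apply: (Pc) => //; rewrite -[_ * v]addr0 Pc.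
move=> j _; rewrite mulrC -[_ * _]addr0; apply: (Pc) => //.
rewrite mxE /= (_ : insub _ = Some k); last by rewrite -(valK k).
by rewrite (mulrC (s k)) -mulNr comb.
Qed.
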